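(* Let $T$ be a Cartesian tree with root $i$, left subtree $A$ and right subtree $B$. If $A$ is nonempty then $|ng(T,i-1)|=lbl(B)+1$, and if $B$ is nonempty then $|ng(T,i)|=lbr(A)+1$.
   Context: Sequences are finite sequences of pairwise distinct integers indexed from $1$. The Cartesian tree $C(x)$ of a sequence $x$ of length $n$ is empty if $n=0$; otherwise, if $x[i]$ is the minimum of $x$, it is the binary tree with root $i$ (nodes labelled by positions), left subtree $C(x[1\ldots i-1])$ and right subtree $C(x[i+1\ldots n])$. For $1\le i\le n-1$, $\tau(x,i)$ is obtained from $x$ by exchanging $x[i]$ and $x[i+1]$. For a Cartesian tree $T$ with $n$ nodes and $1\le i\le n-1$, $ng(T,i)=\{C(\tau(x,i)) : x \text{ a sequence with } C(x)=T\}$. For a binary tree $T$, $lbl(T)=0$ if $T$ is empty and $lbl(T)=1+lbl(A)$ where $A$ is the left subtree of $T$ otherwise (number of nodes on the left branch); $lbr$ is defined symmetrically with right subtrees. *)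

(* Defs.v *)
From Stdlib Require List.
From mathcomp Require Import all_boot all_order all_algebra.
Set Implicit Arguments. Unset Strict Implicit. Unset Printing Implicit Defensive.
Import Order.TTheory GRing.Theory Num.Theory.
Local Open Scope ring_scope.

(* Binary trees whose nodes carry a label (a position, 1-indexed). *)
Inductive btree := Leaf | Node of btree & nat & btree.

Definition seqmin (x : int) (s : seq int) : int :=
  foldr (fun a b => if a < b then a else b) x s.

(* Cartesian tree with labels offset by k (positions k+1 .. k+n); fuel f >= size *)
Fixpoint cart_aux (f : nat) (k : nat) (x : seq int) : btree :=
  match f with
  | 0%N => Leaf
  | f'.+1 =>
    match x with
    | [::] => Leaf
    | a :: s =>
      let m := index (seqmin a s) x in
      Node (cart_aux f' k (take m x)) (k + m.+1)%N
           (cart_aux f' (k + m.+1)%N (drop m.+1 x))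
    end
  end.

Definition cart (x : seq int) : btree := cart_aux (size x) 0 x.

(* tau(x,i): exchange x[i] and x[i+1] (1-indexed) *)
Definition tau (x : seq int) (i : nat) : seq int :=
  set_nth 0 (set_nth 0 x i.-1 (nth 0 x i)) i (nth 0 x i.-1).

Fixpoint tsize (t : btree) : nat :=
  match t with Leaf => 0 | Node a _ b => (tsize a + tsize b).+1 end.

Definition ng (T : btree) (i : nat) (T' : btree) : Prop :=
  exists x : seq int, uniq x /\ cart x = T /\ T' = cart (tau x i).

Fixpoint lbl (t : btree) : nat :=
  match t with Leaf => 0 | Node a _ _ => (lbl a).+1 end.
Fixpoint lbr (t : btree) : nat :=
  match t with Leaf => 0 | Node _ _ b => (lbr b).+1 end.

Definition card_is (P : btree -> Prop) (k : nat) : Prop :=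
  exists l : list btree, Stdlib.Lists.List.NoDup l /\ (forall t, Stdlib.Lists.List.In t l <-> P t)
                         /\ Stdlib.Lists.List.length l = k.

(* Main.v *)
Require Import Defs.
From mathcomp Require Import all_boot all_order all_algebra zify.
Import Order.TTheory GRing.Theory Num.Theory.

Definition ct (k : nat) (x : seq int) := cart_aux (size x) k x.

Lemma seqmin_in a s : seqmin a s \in a :: s.
Proof.
elim: s => [|b s IH] /=; first by rewrite inE.
case: ifP => _; first by rewrite !inE eqxx orbT.
by move: IH; rewrite !inE => /orP [->|->]; rewrite ?orbT.
Qed.

Lemma seqmin_le a s y : y \in a :: s -> (seqmin a s <= y)%R.
Proof.
elim: s y => [|b s IH] y /=; first by rewrite inE => /eqP ->.
rewrite !inE => /or3P [/eqP->|/eqP->|ys].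
- have := IH a; rewrite inE eqxx => /(_ isT) h.
  case: ifP => hb; last done. exact: (le_trans (ltW hb) h).
- case: ifP => hb //. by rewrite leNgt hb.
- have := IH y; rewrite inE ys orbT => /(_ isT) h.
  case: ifP => hb //. exact: (le_trans (ltW hb) h).
Qed.

Lemma cart_fuel f1 f2 k x : size x <= f1 -> size x <= f2 ->
  cart_aux f1 k x = cart_aux f2 k x.
Proof.
elim: f1 f2 k x => [|f1 IH] f2 k x; first by case: x => [|a s] //; case: f2.
case: f2 => [|f2]; first by case: x.
case: x => [|a s] // h1 h2.
have E : forall f, cart_aux f.+1 k (a :: s) =
  Node (cart_aux f k (take (index (seqmin a s) (a :: s)) (a :: s))) (k + (index (seqmin a s) (a :: s)).+1)
      (cart_aux f (k + (index (seqmin a s) (a :: s)).+1) (drop (index (seqmin a s) (a :: s)).+1 (a :: s))) by [].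
rewrite !E.
have hm : index (seqmin a s) (a :: s) < size (a :: s) by rewrite index_mem seqmin_in.
move: (index _ _) hm => m hm.
move: h1 h2 hm; rewrite /= => h1 h2 hm.
clear E; congr Node; apply: IH;
 rewrite ?size_take ?size_drop /=; try case: ifP => c; lia.
Qed.

Lemma ct_fuel f k x : size x <= f -> cart_aux f k x = ct k x.
Proof. by move=> h; apply: cart_fuel. Qed.

Lemma ct_nil k : ct k [::] = Leaf.
Proof. by []. Qed.

Lemma cart_auxS f k a s : cart_aux f.+1 k (a :: s) =
  Node (cart_aux f k (take (index (seqmin a s) (a :: s)) (a :: s))) (k + (index (seqmin a s) (a :: s)).+1)
      (cart_aux f (k + (index (seqmin a s) (a :: s)).+1) (drop (index (seqmin a s) (a :: s)).+1 (a :: s))).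
Proof. by []. Qed.

Lemma ct_split k (l : seq int) (m : int) (r : seq int) :
  (forall y, y \in l -> (m < y)%R) -> (forall y, y \in r -> (m < y)%R) ->
  ct k (l ++ m :: r) = Node (ct k l) (k + size l).+1 (ct (k + size l).+1 r).
Proof.
move=> hl hr.
have mnl : m \notin l by apply/negP => /hl; rewrite ltxx.
have mem : forall y, y \in l ++ m :: r -> (m <= y)%R.
  move=> y; rewrite mem_cat inE => /or3P [/hl/ltW|/eqP->|/hr/ltW] //.
rewrite /ct.
have : exists a s, l ++ m :: r = a :: s by case: (l) => [|a s]; eexists; eexists.
case=> a [s] e; rewrite e (cart_auxS (size s)).
have hmin : seqmin a s = m.
  apply/le_anti; apply/andP; split.
    by apply: seqmin_le; rewrite -e mem_cat inE eqxx orbT.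
  by apply: mem; rewrite e seqmin_in.
rewrite hmin -e index_cat (negbTE mnl).
have -> : index m (m :: r) = 0 by rewrite /= eqxx.
rewrite addn0 take_size_cat //.
have -> : drop (size l).+1 (l ++ m :: r) = r by rewrite -cat_rcons drop_size_cat // size_rcons.
have hs : size (l ++ m :: r) = (size s).+1 by rewrite e.
rewrite size_cat /= in hs.
rewrite addnS.
congr Node; apply: ct_fuel; lia.
Qed.

Lemma uniq_split (x : seq int) : x != [::] -> uniq x ->
  exists (l : seq int) (m : int) (r : seq int), x = l ++ m :: r /\ (forall y, y \in l -> (m < y)%R) /\ (forall y, y \in r -> (m < y)%R).
Proof.
case: x => [|a s] // _.
have hle := @seqmin_le a s.
move: (seqmin a s) (seqmin_in a s) hle => m.
move: (a :: s) => x; case/splitPr => l r hle u.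
exists l, m, r; split; first done.
rewrite cat_uniq in u; case/and3P: u => _ /= /norP[/negbTE ml _] /andP[/negbTE mr _].
split=> y hy; rewrite lt_neqAle hle ?mem_cat ?inE ?hy ?orbT // andbT;
  apply/eqP => e; subst; by rewrite ?ml ?mr in hy.
Qed.

Lemma uniq_ind (P : seq int -> Prop) : P [::] ->
  (forall (l : seq int) (m : int) (r : seq int), (forall y, y \in l -> (m < y)%R) ->
     (forall y, y \in r -> (m < y)%R) -> uniq (l ++ m :: r) -> P l -> P r -> P (l ++ m :: r)) ->
  forall x, uniq x -> P x.
Proof.
move=> h0 hs x.
elim: {x} (size x).+1 {-2}x (ltnSn (size x)) => [|n IH] x // hx u.
case: (altP (x =P [::])) => [->|xn] //.
have [l [m [r [e [hl hr]]]]] := uniq_split _ xn u.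
subst x; move: u => u; apply: hs => //.
- apply: IH; first by move: hx; rewrite size_cat /=; lia.
  by move: u; rewrite cat_uniq => /and3P[].
- apply: IH; first by move: hx; rewrite size_cat /=; lia.
  by move: u; rewrite cat_uniq => /and3P[_ _ /andP[]].
Qed.

Lemma tsize_ct k x : uniq x -> Defs.tsize (ct k x) = size x.
Proof.
move=> u; move: x u k; apply: uniq_ind => [|l m r hl hr _ IHl IHr] k //.
by rewrite ct_split //= IHl IHr size_cat /= addnS.
Qed.

Lemma ct_leaf k x : uniq x -> ct k x = Leaf -> x = [::].
Proof.
move=> u; move: x u k; apply: uniq_ind => [|l m r hl hr _ IHl IHr] k //.
by rewrite ct_split.
Qed.

Lemma ct_mono (g : int -> int) k x : {mono g : a b / (a < b)%R} -> uniq x ->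
  ct k (map g x) = ct k x.
Proof.
move=> hg u; move: x u k; apply: uniq_ind => [|l m r hl hr _ IHl IHr] k //.
rewrite map_cat /= ct_split ?ct_split ?size_map ?IHl ?IHr //.
- by move=> y /mapP [z zl ->]; rewrite hg; apply: hl.
- by move=> y /mapP [z zl ->]; rewrite hg; apply: hr.
Qed.

Fixpoint mir (N : nat) (t : btree) : btree :=
  match t with Leaf => Leaf | Node a j b => Node (mir N b) (N - j) (mir N a) end.

Lemma ct_rev k k' x : uniq x -> ct k' (rev x) = mir (k + k' + size x).+1 (ct k x).
Proof.
move=> u; move: x u k k'; apply: uniq_ind => [|l m r hl hr _ IHl IHr] k k' //.
rewrite rev_cat rev_cons cat_rcons ct_split // ct_split;
  [|by move=> y; rewrite mem_rev; apply: hr|by move=> y; rewrite mem_rev; apply: hl].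
rewrite /= size_rev (IHl k) (IHr (k + size l).+1) size_cat /=.
congr Node; first (congr mir; lia); first lia.
congr mir; lia.
Qed.

Lemma lbl_mir N t : lbl (mir N t) = lbr t.
Proof. by elim: t => //= a IHa j b IHb; rewrite IHb. Qed.

Fixpoint ins (d : nat) (j : nat) (t : btree) : btree :=
  match d, t with
  | 0, _ => Node Leaf j t
  | d'.+1, Node a q b => Node (ins d' j a) q b
  | _.+1, Leaf => Node Leaf j Leaf
  end.

Fixpoint rmlast (t : btree) : btree :=
  match t with
  | Leaf => Leaf
  | Node a j Leaf => a
  | Node a j b => Node a j (rmlast b)
  end.

Lemma ins_node d j t : ins d j t <> Leaf.
Proof. by case: d t => [|d] [|a q b]. Qed.

Lemma ins_inj d d' j t : d <= lbl t -> d' <= lbl t -> ins d j t = ins d' j t -> d = d'.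
Proof.
elim: d d' t => [|d IH] [|d'] [|a q b] //=.
- by move=> _ _ [] /esym /ins_node.
- by move=> _ _ [] /ins_node.
- by move=> h1 h2 [] /(IH _ _ h1 h2) ->.
Qed.

Lemma ct_single k (p : int) : ct k [:: p] = Node Leaf k.+1 Leaf.
Proof. by have := ct_split k [::] p [::]; rewrite addn0 => ->. Qed.

Lemma rmlast_ct k (a : seq int) (p : int) : uniq (rcons a p) -> rmlast (ct k (rcons a p)) = ct k a.
Proof.
elim: {a} (size a).+1 {-2}a (ltnSn (size a)) k => [|n IH] a // ha k u.
have nn : rcons a p != [::] by case: a {ha u}.
have [l [m [r [e [hl hr]]]]] := uniq_split _ nn u.
case/lastP: r e hr => [|r' q] e hr.
- rewrite cats1 in e; case/rcons_inj: e => -> ->.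
  by rewrite -cats1 ct_split.
- rewrite -rcons_cons -rcons_cat in e; case/rcons_inj: e => ea eq; subst a q.
  have hr' : forall y, y \in r' -> (m < y)%R.
    by move=> y yr; apply: hr; rewrite mem_rcons inE yr orbT.
  rewrite rcons_cat rcons_cons ct_split // [RHS]ct_split //.
  rewrite rcons_cat rcons_cons cat_uniq in u; case/and3P: u => _ _ /andP[_ u].
  case E: (ct (k + size l).+1 (rcons r' p)) => [|L j R].
  + by move/ct_leaf: E => /(_ u); case: (r').
  + have -> : forall X q, rmlast (Node X q (Node L j R)) = Node X q (rmlast (Node L j R)) by [].
    rewrite -E IH //; move: ha; rewrite size_cat /=; lia.
Qed.

Lemma ins_ex (p : int) (r : seq int) k : uniq (p :: r) ->
  exists d, d <= lbl (ct k.+1 r) /\ ct k (p :: r) = ins d k.+1 (ct k.+1 r).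
Proof.
case/andP=> pr ur; move: r ur k pr; apply: uniq_ind => [|l m r hl hr u IHl IHr] k pr.
  by exists 0; split => //; rewrite ct_single.
have pm : p != m by apply: contra pr => /eqP ->; rewrite mem_cat inE eqxx orbT.
case: (ltgtP p m) => [pltm|mltp|]; last by move/eqP; rewrite (negbTE pm).
- exists 0; split => //.
  have := ct_split k [::] p (l ++ m :: r); rewrite addn0 /= => -> //.
  move=> y; rewrite mem_cat inE => /or3P [/hl|/eqP->|/hr] //; exact: lt_trans.
- have pl : p \notin l by apply: contra pr => pl; rewrite mem_cat pl.
  have [d [hd e]] := IHl k pl.
  exists d.+1; rewrite ct_split //=; split => //.
  rewrite -cat_cons ct_split; last by [].
    by rewrite e /= addnS addSn.
  by move=> y; rewrite inE => /orP [/eqP->|/hl].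
Qed.

Lemma lower_bound (s : seq int) (v : int) : exists lo, (lo <= v)%R /\ forall y, y \in s -> (lo <= y)%R.
Proof.
elim: s => [|a s [lo [h1 h2]]]; first by exists v.
case: (lerP lo a) => h.
- exists lo; split=> // y; rewrite inE => /orP [/eqP->|/h2] //.
- exists a; split; first by lia.
  move=> y; rewrite inE => /orP [/eqP->|/h2] //; lia.
Qed.

Lemma upper_bound (s : seq int) (v : int) : exists hi, (v <= hi)%R /\ forall y, y \in s -> (y <= hi)%R.
Proof.
elim: s => [|a s [hi [h1 h2]]]; first by exists v.
case: (lerP a hi) => h.
- exists hi; split=> // y; rewrite inE => /orP [/eqP->|/h2] //.
- exists a; split; first by lia.
  move=> y; rewrite inE => /orP [/eqP->|/h2] //; lia.
Qed.

Lemma odd_below (w : int) : exists z : int, (2 * z + 1 < w)%R.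
Proof. case: (ltrP 0 w) => h; [exists (-1)%R | exists (w - 1)%R]; lia. Qed.

Lemma dbl_above (w : int) : exists t : int, (w < 2 * t)%R.
Proof. case: (ltrP 0 w) => h; [exists w | exists 1%R]; lia. Qed.

Definition aff (c : int) := fun y : int => (2 * y + c)%R.

Lemma aff_mono c : {mono aff c : a b / (a < b)%R}.
Proof. move=> a b; rewrite /aff; apply/idP/idP => h; lia. Qed.

Lemma aff_inj c : injective (aff c).
Proof. move=> a b; rewrite /aff => h; lia. Qed.

Definition isodd (y : int) := exists z : int, y = (2 * z + 1)%R.

Lemma real (r : seq int) k d (v : int) : uniq r -> d <= lbl (ct k.+1 r) -> (exists z, v = 2 * z)%R ->
  exists r' : seq int, [/\ uniq r', (forall y, y \in r' -> isodd y), ct k.+1 r' = ct k.+1 r &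
     ct k (v :: r') = ins d k.+1 (ct k.+1 r)].
Proof.
move=> u; move: r u k d v; apply: uniq_ind => [|l m r hl hr u IHl IHr] k d v.
  rewrite leqn0 => /eqP -> _; exists [::]; split => //; by rewrite ct_single.
have hs := ct_split k.+1 l m r hl hr; rewrite hs /= => hd [z vz].
case: d hd => [|d] hd.
- exists (map (aff (2 * (z - m) + 1)%R) (l ++ m :: r)); split.
  + by rewrite map_inj_uniq //; apply: aff_inj.
  + move=> y /mapP [w _ ->]; rewrite /aff; exists (w + z - m)%R; lia.
  + by rewrite (ct_mono _ _ _ (aff_mono _) u).
  + rewrite (ct_split k [::] v) //= ?addn0.
      by rewrite (ct_mono _ _ _ (aff_mono _) u) ?hs.
    move=> y /mapP [w wi ->]; rewrite /aff.
    have : (m <= w)%R by move: wi; rewrite mem_cat inE => /or3P [/hl/ltW|/eqP->|/hr/ltW].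
    lia.
- have [ul ur] : uniq l /\ uniq r.
    by move: u; rewrite cat_uniq => /and3P [? _ /andP [_ ?]].
  have [l' [ul' ol' cl' il']] := IHl k d v hd (ex_intro _ z vz).
  have [lo [lov lol]] := lower_bound l' v.
  have [hi [vhi hil]] := upper_bound l' v.
  have [w hw] := odd_below lo.
  have [t ht] := dbl_above (hi - 2 * m)%R.
  pose rr := map (aff (2 * t + 1)%R) r.
  have hrr : forall y, y \in rr -> (hi < y)%R.
    move=> y /mapP [x xr ->]; have := hr _ xr; rewrite /aff; lia.
  have hm'l : forall y, y \in l' -> (2 * w + 1 < y)%R.
    move=> y /lol; lia.
  have hm'r : forall y, y \in rr -> (2 * w + 1 < y)%R.
    move=> y /hrr; lia.
  have sl : size l' = size l.
    by rewrite -(tsize_ct k.+1 _ ul') -(tsize_ct k.+1 _ ul) cl'.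
  exists (l' ++ (2 * w + 1)%R :: rr); split.
  + rewrite cat_uniq ul' /= map_inj_uniq ?ur; last exact: aff_inj.
    rewrite andbT; apply/andP; split.
    * apply/norP; split.
        by apply/negP => /hm'l; rewrite ltxx.
      apply/hasPn => y /hrr h; apply/negP => /hil; lia.
    * by apply/negP => /hrr; lia.
  + move=> y; rewrite mem_cat inE => /or3P [/ol'|/eqP->|/mapP [x _ ->]] //.
      by exists w.
    by rewrite /aff; exists (x + t)%R; lia.
  + rewrite ?hs ct_split // cl' sl (ct_mono _ _ _ (aff_mono _) ur) //.
  + rewrite -cat_cons ct_split //=; last first.
      move=> y; rewrite inE => /orP [/eqP->|/hm'l] //; lia.
    rewrite il' ?hs /= sl (ct_mono _ _ _ (aff_mono _) ur).
    by rewrite addnS addSn.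
Qed.


Lemma set_nth_cat0 (a s : seq int) n (y : int) : set_nth 0%R (a ++ s) (size a + n) y = a ++ set_nth 0%R s n y.
Proof. by elim: a => //= b a ->. Qed.

Lemma tau_swap (a b : seq int) (u w : int) : tau (a ++ u :: w :: b) (size a).+1 = a ++ w :: u :: b.
Proof.
rewrite /tau /= !nth_cat ltnn subnn.
have -> : (size a).+1 < size a = false by rewrite ltnNge leqnSn.
rewrite subSnn /=.
have e1 := set_nth_cat0 a [:: u, w & b] 0 w; rewrite addn0 in e1; rewrite e1 /=.
by have e2 := set_nth_cat0 a [:: w, w & b] 1 u; rewrite addn1 in e2; rewrite e2.
Qed.

Lemma cartE x : cart x = ct 0 x.
Proof. by []. Qed.

Lemma decomp (x : seq int) A i B : uniq x -> cart x = Node A i B ->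
  exists (l : seq int) (m : int) (r : seq int), x = l ++ m :: r /\ [/\ (forall y, y \in l -> (m < y)%R),
    (forall y, y \in r -> (m < y)%R), A = ct 0 l, i = (size l).+1 & B = ct i r].
Proof.
move=> u; case: (altP (x =P [::])) => [->|xn] //.
have [l [m [r [e [hl hr]]]]] := uniq_split _ xn u.
rewrite cartE e ct_split // add0n; case=> <- <- <-.
by exists l, m, r; split.
Qed.

Lemma uniq_swap (a b : seq int) (u w : int) : uniq (a ++ u :: w :: b) = uniq (a ++ w :: u :: b).
Proof.
apply: perm_uniq; rewrite perm_cat2l.
by apply/permP => P /=; rewrite addnCA.
Qed.

Lemma ng_char1 (x : seq int) A i B : uniq x -> cart x = Node A i B -> A <> Leaf ->
  forall t, ng (Node A i B) i.-1 t <-> exists d, d <= lbl B /\ t = Node (rmlast A) i.-1 (ins d i B).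
Proof.
move=> ux cx nA t; split.
- case=> y [uy [cy ->]].
  have [l [m [r [ey [hl hr eA ei eB]]]]] := decomp _ _ _ _ uy cy.
  case/lastP: l ey hl eA ei => [|a p] ey hl eA ei; first by rewrite eA in nA.
  rewrite cat_rcons in ey; subst y.
  rewrite size_rcons in ei; subst i => /=.
  rewrite tau_swap cartE ct_split; first last.
  - by move=> y; rewrite inE => /orP [/eqP->|/hr]; [apply: hl; rewrite mem_rcons inE eqxx|].
  - by move=> y ya; apply: hl; rewrite mem_rcons inE ya orbT.
  have upr : uniq (p :: r).
    move: uy; rewrite cat_uniq => /and3P [_ _]; rewrite /= !inE negb_or => /andP [/andP [_ ->] /andP [_ ->]] //.
  have [d [hd e]] := ins_ex p r (size a).+1 upr.
  exists d; rewrite eB; split => //.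
  have ua : uniq (rcons a p).
    by move: uy; rewrite -cat_rcons cat_uniq => /and3P [-> _ _].
  by rewrite eA rmlast_ct // add0n e.
- case=> d [hd ->].
  have [l [m [r [ex [hl hr eA ei eB]]]]] := decomp _ _ _ _ ux cx.
  case/lastP: l ex hl eA ei => [|a p] ex hl eA ei; first by rewrite eA in nA.
  rewrite size_rcons in ei.
  have ur : uniq r by move: ux; rewrite ex cat_uniq => /and3P [_ _] /= /andP [].
  have ua : uniq (rcons a p) by move: ux; rewrite ex cat_uniq => /and3P [-> _ _].
  have hd' : d <= lbl (ct (size a).+2 r) by rewrite -ei -eB.
  have ev : exists z, aff 0 p = (2 * z)%R by exists p; rewrite /aff addr0.
  have [r' [ur' or' cr' ir']] := real r (size a).+1 d (aff 0 p) ur hd' ev.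
  pose a' := map (aff 0) a.
  have [lo [_ hlo]] := lower_bound (rcons a' (aff 0 p) ++ r') 0%R.
  pose m' := (lo - 1)%R.
  have hm'a : forall y, y \in rcons a' (aff 0 p) -> (m' < y)%R.
    by move=> y hy; have := hlo y; rewrite mem_cat hy => /(_ isT); rewrite /m'; lia.
  have hm'r : forall y, y \in r' -> (m' < y)%R.
    by move=> y hy; have := hlo y; rewrite mem_cat hy orbT => /(_ isT); rewrite /m'; lia.
  have ea' : rcons a' (aff 0 p) = map (aff 0) (rcons a p) by rewrite map_rcons.
  have uy : uniq (rcons a' (aff 0 p) ++ m' :: r').
    rewrite cat_uniq /= ur' ea' map_inj_uniq ?ua; last exact: aff_inj.
    rewrite andbT /=; apply/andP; split; last by apply/negP => /hm'r; rewrite ltxx.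
    apply/norP; split.
      by apply/negP; rewrite -ea' => /hm'a; rewrite ltxx.
    apply/hasPn => y /or' [z ->]; apply/negP => /mapP [w _]; rewrite /aff; lia.
  have cy : cart (rcons a' (aff 0 p) ++ m' :: r') = Node A i B.
    rewrite cartE ct_split // ea' (ct_mono _ _ _ (aff_mono _) ua) size_map size_rcons add0n.
    by rewrite -eA ei cr' -ei -eB.
  exists (rcons a' (aff 0 p) ++ m' :: r'); split => //; split => //.
  rewrite ei /= cat_rcons -(size_map (aff 0) a) tau_swap cartE ct_split; first last.
  - by move=> y; rewrite inE => /orP [/eqP->|/hm'r] //; apply: hm'a; rewrite mem_rcons inE eqxx.
  - by move=> y ya; apply: hm'a; rewrite mem_rcons inE ya orbT.
  rewrite /a' add0n size_map ir' eB ei (ct_mono _ _ _ (aff_mono _)); last first.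
    by move: ua; rewrite rcons_uniq => /andP[].
  by rewrite eA rmlast_ct.
Qed.

Lemma card_of_char (P : btree -> Prop) L (F : nat -> btree) :
  (forall d d', d <= L -> d' <= L -> F d = F d' -> d = d') ->
  (forall t, P t <-> exists d, d <= L /\ t = F d) -> card_is P L.+1.
Proof.
move=> Finj hP; exists (List.map F (List.seq 0 L.+1)); split; [|split].
- apply: List.NoDup_map_NoDup_ForallPairs; last exact: List.seq_NoDup.
  move=> a b /List.in_seq ha /List.in_seq hb; apply: Finj; lia.
- move=> t; rewrite hP; split.
  + case/List.in_map_iff => d [<- /List.in_seq hd]; exists d; split => //; lia.
  + case=> d [hd ->]; apply: List.in_map; apply/List.in_seq; lia.
- by rewrite List.length_map List.length_seq.
Qed.

Lemma part1 (x : seq int) A i B : uniq x -> cart x = Node A i B -> A <> Leaf ->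
  card_is (ng (Node A i B) i.-1) (lbl B).+1.
Proof.
move=> ux cx nA.
apply: (card_of_char _ _ (fun d => Node (rmlast A) i.-1 (ins d i B))); last exact: (ng_char1 _ _ _ _ ux cx nA).
by move=> d d' h1 h2 [] /(ins_inj _ _ _ _ h1 h2).
Qed.

Lemma card_transfer (P P' : btree -> Prop) (f : btree -> btree) k :
  (forall t, P t -> P' (f t) /\ f (f t) = t) -> (forall t', P' t' -> P (f t') /\ f (f t') = t') ->
  card_is P' k -> card_is P k.
Proof.
move=> h1 h2 [l' [nd [hin hlen]]].
exists (List.map f l'); split; [|split].
- apply: List.NoDup_map_NoDup_ForallPairs => // a b /hin /h2 [_ ea] /hin /h2 [_ eb] e.
  by rewrite -ea -eb e.
- move=> t; split.
  + by case/List.in_map_iff => t' [<- /hin /h2 []].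
  + move=> /h1 [/hin ht e]; rewrite -e; exact: List.in_map.
- by rewrite List.length_map.
Qed.

Lemma mir_inv (w : seq int) : uniq w -> mir (size w).+1 (mir (size w).+1 (ct 0 w)) = ct 0 w.
Proof.
move=> u; have e1 := ct_rev 0 0 w u; have e2 := ct_rev 0 0 (rev w) (etrans (rev_uniq w) u).
rewrite revK size_rev /= in e2; rewrite /= in e1.
by rewrite -e1 -e2.
Qed.

Lemma rev_mid (a b : seq int) (u w : int) : rev (a ++ u :: w :: b) = rev b ++ w :: u :: rev a.
Proof. by rewrite rev_cat !rev_cons -!cats1 -!catA. Qed.

Lemma tsize_cart (x : seq int) : uniq x -> Defs.tsize (cart x) = size x.
Proof. by move=> u; rewrite cartE tsize_ct. Qed.

Lemma mir_leaf N t : mir N t = Leaf -> t = Leaf.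
Proof. by case: t. Qed.

Theorem lemma8 (T A B : btree) (i : nat) :
  (exists x : seq int, uniq x /\ cart x = T) ->
  T = Node A i B ->
  (A <> Leaf -> card_is (ng T i.-1) (lbl B).+1) /\
  (B <> Leaf -> card_is (ng T i) (lbr A).+1).
Proof.
case=> x [ux cx] eT; rewrite eT in cx *; split; first exact: (part1 _ _ _ _ ux cx).
move=> nB.
set n := size x. set N := n.+1.
have urx : uniq (rev x) by rewrite rev_uniq.
have cT' : cart (rev x) = Node (mir N B) (N - i) (mir N A).
  by rewrite cartE (ct_rev 0 0 x ux) -cartE cx.
have [l0 [m0 [r0 [ex0 [_ _ eA0 ei0 eB0]]]]] := decomp _ _ _ _ ux cx.
have hin : i <= n by rewrite /n ex0 size_cat ei0 /=; lia.
have hT : mir N (mir N (Node A i B)) = Node A i B by rewrite -cx cartE /N /n mir_inv.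
have nB' : mir N B <> Leaf by move/mir_leaf.
have p1 := part1 (rev x) (mir N B) (N - i) (mir N A) urx cT' nB'.
rewrite lbl_mir in p1.
apply: (card_transfer _ _ (mir N) _ _ _ p1).
- move=> t [y [uy [cy ->]]].
  have sy : size y = n by rewrite -(tsize_cart _ uy) cy -cx tsize_cart.
  have [l [m [r [ey [hl hr eA ei eB]]]]] := decomp _ _ _ _ uy cy.
  case: r ey hr eB => [|q r'] ey hr eB; first by rewrite eB in nB.
  subst y; rewrite ei tau_swap.
  have uw : uniq (l ++ q :: m :: r') by rewrite -uniq_swap.
  have sw : size (l ++ q :: m :: r') = n by rewrite -sy !size_cat.
  split.
  + exists (rev (l ++ m :: q :: r')); split; first by rewrite rev_uniq.
    split.
    * by rewrite cartE (ct_rev 0 0 _ uy) -cartE cy !add0n sy -ei.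
    * rewrite rev_mid.
      have -> : (N - (size l).+1).-1 = (size (rev r')).+1.
        by move: sy; rewrite /N size_rev size_cat /=; lia.
      by rewrite tau_swap -rev_mid !cartE (ct_rev 0 0 _ uw) !add0n sw.
  + by rewrite cartE /N -sw mir_inv.
- move=> t [z [uz [cz ->]]].
  have sz : size z = n by rewrite -(tsize_cart _ uz) cz -cT' tsize_cart // size_rev.
  have [l [m [r [ez [hl hr eA ei eB]]]]] := decomp _ _ _ _ uz cz.
  case/lastP: l ez hl eA ei => [|a q] ez hl eA ei; first by rewrite eA in nB'.
  rewrite cat_rcons in ez; subst z; rewrite size_rcons in ei; rewrite ei /= tau_swap.
  have uw : uniq (a ++ m :: q :: r) by rewrite -uniq_swap.
  have sw : size (a ++ m :: q :: r) = n by rewrite -sz !size_cat.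
  split.
  + exists (rev (a ++ q :: m :: r)); split; first by rewrite rev_uniq.
    split.
    * rewrite cartE (ct_rev 0 0 _ uz) -cartE cz sz.
      by rewrite -[in RHS]hT.
    * rewrite rev_mid.
      have -> : i = (size (rev r)).+1.
        by move: sz ei; rewrite size_rev size_cat /=; lia.
      by rewrite tau_swap -rev_mid !cartE (ct_rev 0 0 _ uw) !add0n sw.
  + by rewrite cartE /N -sw mir_inv.
Qed.
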